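(* If $x=x_1\cdots x_n\in\mathrm{Sort}_n(123,321)$, then $x_1\in\{n-1,n\}$.
   Context: A permutation contains a pattern $p$ if it has a subsequence order-isomorphic to $p$; otherwise it avoids $p$. For a set $T$ of patterns, the map $s_T$ is defined as follows: the entries of the input permutation are read from left to right, with an initially empty stack. At each step, if the input is nonempty and pushing the next input entry onto the stack produces a stack whose contents, read from top to bottom, avoid every pattern in $T$, that entry is pushed; otherwise the top entry of the stack is popped and appended to the output. When the input is exhausted, the remaining stack entries are popped one at a time to the output. Write $s_{\sigma,\tau}=s_{\{\sigma,\tau\}}$ and $s=s_{\{21\}}$ (West's stack-sorting map). $\mathrm{Sort}_n(\sigma,\tau)$ is the set of $x\in S_n$ with $s(s_{\sigma,\tau}(x))=12\cdots n$. *)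

(* Defs.v *)
From mathcomp Require Import all_boot.
Set Implicit Arguments. Unset Strict Implicit. Unset Printing Implicit Defensive.

Definition order_iso (s p : seq nat) : bool :=
  (size s == size p) &&
  all (fun i => all (fun j =>
     (nth 0 s i < nth 0 s j) == (nth 0 p i < nth 0 p j))
     (iota 0 (size p))) (iota 0 (size p)).

Fixpoint subseqs (w : seq nat) : seq (seq nat) :=
  match w with
  | [::] => [:: [::]]
  | a :: r => let l := subseqs r in map (cons a) l ++ l
  end.

Definition contains (w p : seq nat) : bool :=
  has (fun s => order_iso s p) (subseqs w).

Definition avoids_all (T : seq (seq nat)) (w : seq nat) : bool :=
  all (fun p => ~~ contains w p) T.

(* One run of the pattern-avoiding stack machine s_T.
   inp: remaining input (left to right); stk: stack read top to bottom;
   out: output so far.  When the input is exhausted the stack is popped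
   top first, i.e. [out ++ stk]. *)
Fixpoint stack_run (T : seq (seq nat)) (fuel : nat)
    (inp stk out : seq nat) : seq nat :=
  match fuel with
  | 0 => out ++ stk
  | f.+1 =>
    match inp with
    | [::] => out ++ stk
    | a :: r =>
      if avoids_all T (a :: stk) then stack_run T f r (a :: stk) out
      else match stk with
           | b :: st => stack_run T f inp st (rcons out b)
           | [::] => out ++ stk (* cannot occur for patterns of length >= 2 *)
           end
    end
  end.

(* s_T; every step pushes or pops, so 2 * size x steps suffice *)
Definition sT (T : seq (seq nat)) (x : seq nat) : seq nat :=
  stack_run T (2 * size x) x [::] [::].

Definition west_s (x : seq nat) : seq nat := sT [:: [:: 2; 1]] x.

Definition s2 (sigma tau : seq nat) (x : seq nat) : seq nat :=
  sT [:: sigma; tau] x.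

Definition in_Sort (n : nat) (sigma tau : seq nat) (x : seq nat) : Prop :=
  perm_eq x (iota 1 n) /\ west_s (s2 sigma tau x) = iota 1 n.

Example ex1 : west_s [:: 3; 1; 2] = [:: 1; 2; 3]. Proof. by []. Qed.
Example ex2 : west_s [:: 2; 3; 1] = [:: 2; 1; 3]. Proof. by []. Qed.
Example ex3 : s2 [:: 1;2;3] [:: 3;2;1] [:: 1; 2; 3; 4] = [:: 2;3;4;1]. Proof. by []. Qed.
Example ex4 : west_s [:: 4;1;3;2] = [:: 1;2;3;4]. Proof. by []. Qed.

(* Main.v *)
Require Import Defs.
From mathcomp Require Import all_boot zify.
Set Implicit Arguments. Unset Strict Implicit. Unset Printing Implicit Defensive.
Lemma containsE w p : contains w p = has (order_iso^~ p) [seq s <- subseqs w | size s == size p].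
Proof. rewrite /contains. elim: (subseqs w) => //= s l IH. case E: (size s == size p) => /=; rewrite IH //. by rewrite {1}/order_iso E. Qed.
Lemma contains3 a b c p : size p = 3 -> contains [:: a; b; c] p = order_iso [:: a; b; c] p.
Proof. move=> hp. rewrite containsE hp /= . by rewrite orbF. Qed.
Lemma contains4 a b c d p : size p = 3 -> contains [:: a; b; c; d] p =
  [|| order_iso [:: a; b; c] p, order_iso [:: a; b; d] p, order_iso [:: a; c; d] p | order_iso [:: b; c; d] p].
Proof. move=> hp. rewrite containsE hp /=. by rewrite !orbF. Qed.
Lemma subseqs_size w s : s \in subseqs w -> size s <= size w.
Proof. elim: w s => [|a w IH] s /=; first by rewrite inE => /eqP->.
rewrite mem_cat => /orP[/mapP[s0 /IH h ->]|/IH h] /=; [exact: h | exact: leqW h]. Qed.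
Lemma contains_small w p : size w < size p -> contains w p = false.
Proof. move=> h. rewrite containsE. apply/hasP=> -[s]. rewrite mem_filter => /andP[/eqP hs hin] _.
move: (@subseqs_size _ _ hin); rewrite hs => h'. move: (leq_ltn_trans h' h); by rewrite ltnn. Qed.
Lemma nil_subseqs w : [::] \in subseqs w.
Proof. elim: w => //= a w IH. by rewrite mem_cat IH orbT. Qed.
Lemma subseq_subseqs s w : subseq s w -> s \in subseqs w.
Proof. elim: w s => [|a w IH] [|b s] //=.
  by rewrite mem_cat nil_subseqs orbT.
case: ifP => [/eqP ->|_] h; rewrite mem_cat.
  by apply/orP; left; apply: map_f; exact: IH.
by rewrite (IH _ h) orbT. Qed.
Lemma index_iota m n a : m <= a < m + n -> index a (iota m n) = a - m.
Proof. elim: n m => [|n IH] m /=; first lia.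
move=> h. case: ifP => [/eqP ->|/eqP ne]; first by rewrite subnn.
rewrite IH; lia. Qed.
Lemma iso123 u v w : order_iso [:: u; v; w] [:: 1;2;3] = (u < v) && (v < w).
Proof. rewrite /order_iso /= !ltnn /=.
case: (ltngtP u v); case: (ltngtP v w); case: (ltngtP u w) => //= *; lia.
Qed.
Lemma iso321 u v w : order_iso [:: u; v; w] [:: 3;2;1] = (u > v) && (v > w).
Proof. rewrite /order_iso /= !ltnn /=.
case: (ltngtP u v); case: (ltngtP v w); case: (ltngtP u w) => //= *; lia.
Qed.
Lemma iso21 u v : order_iso [:: u; v] [:: 2;1] = (u > v).
Proof. rewrite /order_iso /= !ltnn /=.
case: (ltngtP u v) => //= *; lia.
Qed.
Inductive reach (T : seq (seq nat)) (x : seq nat) : nat -> seq nat -> seq nat -> seq nat -> Prop :=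
| R0 : reach T x (2 * size x) x [::] [::]
| Rpush f a r stk out : reach T x f.+1 (a::r) stk out -> avoids_all T (a::stk) ->
    reach T x f r (a::stk) out
| Rpop f a r b st out : reach T x f.+1 (a::r) (b::st) out -> ~~ avoids_all T (a::b::st) ->
    reach T x f (a::r) st (rcons out b).

Lemma reach_run T x f inp stk out : reach T x f inp stk out -> stack_run T f inp stk out = sT T x.
Proof.
elim=> //= [f0 a r stk0 out0 _ IH h|f0 a r b st out0 _ IH h]; rewrite -IH /=.
  by rewrite h.
by rewrite (negbTE h).
Qed.

Lemma reach_inv T x f inp stk out : reach T x f inp stk out ->
  [/\ f = 2 * size inp + size stk, (exists p, x = p ++ inp) & perm_eq (out ++ stk ++ inp) x].
Proof.
elim=> [|f0 a r stk0 out0 _ [IH1 [p Hp] IH3] h|f0 a r b st out0 _ [IH1 [p Hp] IH3] h].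
- split => //; [by rewrite addn0 | by exists [::]].
- split.
  + move: IH1 => /=; lia.
  + by exists (rcons p a); rewrite Hp cat_rcons.
  + apply: perm_trans IH3. by rewrite /= perm_cat2l -cat1s perm_catCA.
- split.
  + move: IH1 => /=; lia.
  + by exists p.
  + by rewrite cat_rcons.
Qed.

Lemma run_prefix T f inp stk out : exists r, stack_run T f inp stk out = out ++ r /\ subseq stk r.
Proof.
elim: f inp stk out => [|f IH] inp stk out /=.
  by exists stk; rewrite subseq_refl.
case: inp => [|a r]; first by exists stk; rewrite subseq_refl.
case: ifP => _.
  have [r' [-> h]] := IH r (a :: stk) out. exists r'; split => //. exact: subseq_trans (subseq_cons _ _) h.
case: stk => [|b st]; first by exists [::].
have [r' [-> h]] := IH (a :: r) st (rcons out b). exists (b :: r'); split.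
  by rewrite cat_rcons.
by rewrite /= eqxx.
Qed.

Lemma eventually T x (P Q : seq nat -> seq nat -> seq nat -> Prop) :
  (forall a, avoids_all T [:: a]) ->
  (forall f inp stk out, reach T x f inp stk out -> P inp stk out -> Q inp stk out \/
     exists a r, inp = a :: r /\
     (avoids_all T (a::stk) -> P r (a::stk) out \/ Q r (a::stk) out) /\
     (forall b st, stk = b :: st -> ~~ avoids_all T (a::stk) ->
          P (a::r) st (rcons out b) \/ Q (a::r) st (rcons out b))) ->
  forall f inp stk out, reach T x f inp stk out -> P inp stk out ->
    exists f' inp' stk' out', reach T x f' inp' stk' out' /\ Q inp' stk' out'.
Proof.
move=> HT Hs f. elim: f => [|f IH] inp stk out Hr HP.
  case: (Hs _ _ _ _ Hr HP) => [HQ|[a [r [E _]]]]; first by exists 0, inp, stk, out.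
  have [H1 _ _] := reach_inv Hr. by move: H1; rewrite E /=; lia.
case: (Hs _ _ _ _ Hr HP) => [HQ|[a [r [E [Hpu Hpo]]]]]; first by exists f.+1, inp, stk, out.
subst inp.
case Ha: (avoids_all T (a :: stk)).
  have Hr' := Rpush Hr Ha.
  case: (Hpu Ha) => [HP'|HQ']; first exact: IH Hr' HP'.
  by exists f, r, (a :: stk), out.
case: stk HP Hr Ha Hpu Hpo => [|b st] _ Hr Ha Hpu Hpo; first by rewrite HT in Ha.
have Hr' := Rpop Hr (negbT Ha).
case: (Hpo b st erefl (negbT Ha)) => [HP'|HQ']; first exact: IH Hr' HP'.
by exists f, (a :: r), st, (rcons out b).
Qed.

Lemma reach_final T x : (forall a, avoids_all T [:: a]) ->
  exists f stk out, reach T x f [::] stk out /\ sT T x = out ++ stk /\ perm_eq (out ++ stk) x.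
Proof.
move=> HT.
have [f [inp [stk [out [Hr Hq]]]]] : exists f' inp' stk' out', reach T x f' inp' stk' out' /\ inp' = [::].
  apply: (@eventually T x (fun _ _ _ => True)) HT _ _ _ _ _ (R0 T x) I.
  move=> f inp stk out _ _. case: inp => [|a r]; [by left | right].
  by exists a, r; split => //; split => *; left.
subst inp. exists f, stk, out. have [_ _ Hp] := reach_inv Hr. rewrite cats0 in Hp.
split => //; split => //. rewrite -(reach_run Hr). by case: f Hr.
Qed.

Definition before (s : seq nat) u v := index u s < index v s.

Lemma before_prefix s o r u v : s = o ++ r -> u \in o -> v \notin o -> before s u v.
Proof.
move=> -> hu hv. rewrite /before !index_cat hu (negbTE hv).
have := index_mem u o. rewrite hu. lia.
Qed.

Lemma subseq_split (u : nat) s r : subseq (u :: s) r -> exists r1 r2, r = r1 ++ u :: r2 /\ subseq s r2.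
Proof.
elim: r => [|a r IH] //=. case: ifP => [/eqP <-|_] h.
  by exists [::], r.
have [r1 [r2 [-> h2]]] := IH h. by exists (a :: r1), r2.
Qed.

Lemma before_subseq s o r u v : s = o ++ r -> uniq s -> subseq [:: u; v] r -> u \notin o -> v \notin o ->
  before s u v.
Proof.
move=> E hu hs huo hvo. have [r1 [r2 [Er h2]]] := subseq_split hs.
rewrite sub1seq in h2.
have hU : uniq (r1 ++ u :: r2) by move: hu; rewrite E Er cat_uniq => /and3P[].
move: hU; rewrite cat_uniq => /and3P[_ hh /= /andP[hur2 _]].
have hur1 : u \notin r1 by apply/negP => h; case/negP: hh; apply/hasP; exists u; rewrite ?inE ?eqxx.
have hvr1 : v \notin r1 by apply/negP => h; case/negP: hh; apply/hasP; exists v; rewrite ?inE ?h2 ?orbT.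
have hvu : v != u by apply/negP => /eqP hvu; rewrite -hvu h2 in hur2.
rewrite /before E Er !index_cat (negbTE huo) (negbTE hvo) (negbTE hur1) (negbTE hvr1) /= eq_sym (negbTE hvu) eqxx.
lia.
Qed.

Lemma uniq_catl_notin (a b : seq nat) u : uniq (a ++ b) -> u \in b -> u \notin a.
Proof.
rewrite cat_uniq => /and3P[_ h _] hu. apply/negP => ha. case/negP: h. apply/hasP. by exists u.
Qed.

Lemma suffix_after x p c r a : x = p ++ c :: r -> uniq x -> a \in x -> before x c a -> a \in r.
Proof.
move=> E hu ha. have hcp : c \notin p by apply: (@uniq_catl_notin p (c :: r)); rewrite -?E ?inE ?eqxx.
rewrite /before E !index_cat (negbTE hcp) /= eqxx addn0.
case: ifP => hap. rewrite -index_mem in hap. move=> h. by move: (ltn_trans hap h); rewrite ltnn.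
move: ha; rewrite E mem_cat hap /= inE => /orP[/eqP ->|//]. by rewrite eqxx addn0 ltnn.
Qed.

Lemma suffix_before x p c r b : x = p ++ c :: r -> uniq x -> before x b c -> b \in p.
Proof.
move=> E hu. have hcp : c \notin p by apply: (@uniq_catl_notin p (c :: r)); rewrite -?E ?inE ?eqxx.
rewrite /before E !index_cat (negbTE hcp) /= eqxx addn0.
case: ifP => // /negbT hb. by rewrite ltnNge leq_addr.
Qed.

Lemma before_total s u v : u \in s -> v \in s -> u != v -> before s u v \/ before s v u.
Proof.
move=> hu hv ne. rewrite /before. case: (ltngtP (index u s) (index v s)); auto.
move=> E. have := nth_index 0 hu. rewrite E nth_index // => E'. by rewrite E' eqxx in ne.
Qed.

Lemma before_last w k u : uniq (rcons w k) -> u \in w -> before (rcons w k) u k.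
Proof.
move=> hu huw. rewrite -cats1 in hu *. rewrite /before !index_cat huw.
have hk : k \notin w by apply: (uniq_catl_notin hu); rewrite inE.
rewrite (negbTE hk) /= eqxx addn0. by rewrite index_mem.
Qed.

Lemma before_iota n a b : a \in iota 1 n -> b \in iota 1 n -> before (iota 1 n) b a -> a < b -> False.
Proof.
rewrite !mem_iota /before => ha hb. rewrite !index_iota //. lia.
Qed.

Lemma avoid_small T (w : seq nat) : all (fun p => size w < size p) T -> avoids_all T w.
Proof.
move=> /allP h. apply/allP => p hp. by rewrite contains_small // h.
Qed.

Lemma contains_sub w s p : subseq s w -> order_iso s p -> contains w p.
Proof. move=> hs hi. apply/hasP. exists s => //. exact: subseq_subseqs. Qed.

Definition T1 := [:: [:: 2; 1]].
Definition T2 := [:: [:: 1; 2; 3]; [:: 3; 2; 1]].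

Lemma W_block b c stk : b \in stk -> b < c -> ~~ avoids_all T1 (c :: stk).
Proof.
move=> hb hbc. rewrite /avoids_all /= andbT negbK. apply: (@contains_sub _ [:: c; b]).
  by rewrite /= eqxx sub1seq.
by rewrite iso21.
Qed.

Lemma uniq_catr_notin (a b : seq nat) u : uniq (a ++ b) -> u \in a -> u \notin b.
Proof. rewrite uniq_catC => h hu. exact: uniq_catl_notin h hu. Qed.

Lemma west_231 y n a b c : perm_eq y (iota 1 n) -> west_s y = iota 1 n -> a \in y ->
  before y b c -> before y c a -> a < b -> b < c -> False.
Proof.
move=> Hp Hw ha hbc hca hab hbc'.
have hu : uniq y by rewrite (perm_uniq Hp) iota_uniq.
have hb : b \in y by rewrite -index_mem (leq_trans hbc) ?index_size.
have hc : c \in y by rewrite -index_mem (leq_trans hca) ?index_size.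
have HT : forall a, avoids_all T1 [:: a] by move=> a'; apply: avoid_small.
have [f1 [i1 [s1 [o1 [Hr1 [r1 Ei1]]]]]] : exists f i s o, reach T1 y f i s o /\ exists r, i = c :: r.
  apply: (@eventually T1 y (fun i _ _ => c \in i)) HT _ _ _ _ _ (R0 T1 y) hc.
  move=> f i s o _ hi. case: i hi => [|a' r] //= hi.
  case: (eqVneq a' c) => [->|ne]; first by left; exists r.
  right; exists a', r; split=> //; split.
    by move=> _; left; move: hi; rewrite inE eq_sym (negbTE ne).
  by move=> *; left.
subst i1. have [_ [p1 Ep1] Hperm1] := reach_inv Hr1.
have hbp := suffix_before Ep1 hu hbc.
have har := suffix_after Ep1 hu ha hca.
have hbnot : b \notin c :: r1 by apply: (@uniq_catr_notin p1); rewrite -?Ep1.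
have hbos : (b \in s1) \/ (b \in o1).
  move: hb; rewrite -(perm_mem Hperm1) !mem_cat (negbTE hbnot) orbF => /orP[]; auto.
have [f2 [i2 [s2 [o2 [Hr2 [hbo2 hai2]]]]]] : exists f i s o, reach T1 y f i s o /\ (b \in o /\ a \in i).
  apply: (@eventually T1 y (fun i s o => i = c :: r1 /\ (b \in s \/ b \in o))) HT _ _ _ _ _ Hr1 (conj erefl hbos).
  move=> f i s o _ [Ei [hbs|hbo]].
    right. exists c, r1. split=> //. split.
      by move=> hav; rewrite (negbTE (W_block hbs hbc')) in hav.
    move=> b' st Es _. left. split=> //. move: hbs; rewrite Es inE => /orP[/eqP->|h]; last by left.
    by right; rewrite mem_rcons inE eqxx.
  by left; split=> //; rewrite Ei inE har orbT.
have [_ _ Hperm2] := reach_inv Hr2.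
have hu2 : uniq (o2 ++ s2 ++ i2) by rewrite (perm_uniq Hperm2).
have hao2 : a \notin o2 by apply: (uniq_catl_notin hu2); rewrite mem_cat hai2 orbT.
have [r' [Erun _]] := run_prefix T1 f2 i2 s2 o2.
rewrite (reach_run Hr2) in Erun.
have Hw' : sT T1 y = iota 1 n by exact: Hw.
rewrite Hw' in Erun.
have := before_prefix Erun hbo2 hao2.
move/before_iota; apply => //; by rewrite -(perm_mem Hp).
Qed.

Lemma T2_single a : avoids_all T2 [:: a]. Proof. by apply: avoid_small. Qed.
Lemma T2_pair a b : avoids_all T2 [:: a; b]. Proof. by apply: avoid_small. Qed.
Lemma T2_123 s u v w : subseq [:: u; v; w] s -> u < v -> v < w -> ~~ avoids_all T2 s.
Proof. move=> hs h1 h2. apply/negP => /andP[/negP h _]; apply: h; apply: contains_sub hs _; by rewrite iso123 h1 h2. Qed.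
Lemma T2_321 s u v w : subseq [:: u; v; w] s -> u > v -> v > w -> ~~ avoids_all T2 s.
Proof. move=> hs h1 h2. apply/negP => /and3P[_ /negP h _]; apply: h; apply: contains_sub hs _; by rewrite iso321 h1 h2. Qed.
Lemma A3N a N k : a < N -> k < N -> avoids_all T2 [:: a; N; k].
Proof. move=> h1 h2. rewrite /avoids_all /= !contains3 // iso123 iso321. lia. Qed.
Lemma A3mono a z k : ~~ avoids_all T2 [:: a; z; k] -> z < k -> a < z.
Proof. rewrite /avoids_all /= !contains3 // iso123 iso321. lia. Qed.
Lemma A4 a N t k : t < k -> k < N -> t < a -> a < N -> avoids_all T2 [:: a; N; t; k].
Proof. move=> *. rewrite /avoids_all /= !contains4 // !iso123 !iso321. lia. Qed.

Lemma KInv x' k f inp stk out : reach T2 (k :: x') f inp stk out ->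
  (stk = [::] /\ inp = k :: x') \/ exists s, stk = rcons s k.
Proof.
elim=> [|f0 a r stk0 out0 _ [[Es Ei]|[s Es]] _|f0 a r b st out0 _ [[Es _]|[s Es]] h].
- by left.
- right; exists [::]; case: Ei => -> _; by rewrite Es.
- right; exists (a :: s); by rewrite Es.
- by [].
- case: s Es => [|c s'] /= [E1 E2]; last by right; exists s'.
  by subst; rewrite T2_pair in h.
Qed.

Lemma conf_prefix T x f i s o : reach T x f i s o -> exists r, sT T x = o ++ r /\ subseq s r.
Proof. move=> Hr. rewrite -(reach_run Hr). exact: run_prefix. Qed.

Lemma conf_uniq T x f i s o : reach T x f i s o -> uniq x -> uniq (o ++ s ++ i).
Proof. move=> Hr hu. have [_ _ Hp] := reach_inv Hr. by rewrite (perm_uniq Hp). Qed.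

Lemma conf_mem T x f i s o u : reach T x f i s o -> (u \in x) = [|| u \in o, u \in s | u \in i].
Proof. move=> Hr. have [_ _ Hp] := reach_inv Hr. by rewrite -(perm_mem Hp) !mem_cat. Qed.

Lemma notin_so (o s i : seq nat) u : uniq (o ++ s ++ i) -> u \in s -> u \notin o.
Proof. move=> h hu. apply: (uniq_catl_notin h). by rewrite mem_cat hu. Qed.
Lemma notin_io (o s i : seq nat) u : uniq (o ++ s ++ i) -> u \in i -> u \notin o.
Proof. move=> h hu. apply: (uniq_catl_notin h). by rewrite mem_cat hu orbT. Qed.
Lemma notin_is (o s i : seq nat) u : uniq (o ++ s ++ i) -> u \in i -> u \notin s.
Proof. rewrite cat_uniq => /and3P[_ _ h] hu. exact: (uniq_catl_notin h). Qed.
Lemma notin_si (o s i : seq nat) u : uniq (o ++ s ++ i) -> u \in s -> u \notin i.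
Proof. rewrite cat_uniq => /and3P[_ _ h] hu. exact: (uniq_catr_notin h). Qed.

Lemma sub_cons2 (a : nat) s t : subseq s t -> subseq (a :: s) (a :: t).
Proof. move=> h. by rewrite /= eqxx. Qed.

Lemma sub_uk (u k : nat) s' : u \in s' -> subseq [:: u; k] (rcons s' k).
Proof. move=> h. rewrite -cats1 -[[:: u; k]]/([:: u] ++ [:: k]). apply: cat_subseq => //. by rewrite sub1seq. Qed.

Lemma main n k x' : perm_eq (k :: x') (iota 1 n) -> west_s (sT T2 (k :: x')) = iota 1 n ->
  k < n.-1 -> False.
Proof.
move=> Hpx Hw hk.
set X := k :: x'.
set N := n. set M := n.-1.
have hux : uniq X by rewrite (perm_uniq Hpx) iota_uniq.
have memX : forall u, (u \in X) = (0 < u <= n).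
  move=> u. rewrite (perm_mem Hpx) mem_iota. lia.
have hkX : k \in X by rewrite inE eqxx.
have hk0 : 0 < k by move: hkX; rewrite memX; lia.
have hNX : N \in X by rewrite memX; lia.
have hMX : M \in X by rewrite memX; lia.
have HT := T2_single.
have [ff [sf [of_ [Hrf [Ey Hpf]]]]] := reach_final X HT.
set y := sT T2 X in Ey.
have Hpy : perm_eq y (iota 1 n) by rewrite Ey; exact: perm_trans Hpf Hpx.
have memy : forall u, (u \in y) = (u \in X) by move=> u; rewrite Ey (perm_mem Hpf).
have hyk : forall u, u \in y -> u != k -> before y u k.
  case: (KInv Hrf) => [[_ E]|[s Es]]; first by [].
  move=> u hu hne. have Ey' : y = rcons (of_ ++ s) k by rewrite Ey Es rcons_cat.
  rewrite Ey'. apply: before_last; first by rewrite -Ey' (perm_uniq Hpy) iota_uniq.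
  move: hu; rewrite Ey' mem_rcons inE (negbTE hne) //.
have noMN : before y M N -> False.
  move=> h. apply: (west_231 (a := k) (b := M) (c := N) Hpy Hw) => //.
  - by rewrite memy.
  - apply: hyk; first by rewrite memy. apply/eqP; lia.
  - rewrite /M /N; lia.
have hltMN : M < N by rewrite /M /N; lia.
have hltkM : k < M by [].
have hltkN : k < N := ltn_trans hltkM hltMN.
have hNk : N != k by apply/eqP; lia.
have hMk : M != k by apply/eqP; lia.
have hMN : M != N by apply/eqP; rewrite /M /N; lia.
have hMN' : N != M by rewrite eq_sym.
have hXNM : before X N M.
  case: (before_total hNX hMX (hMN' : N != M)) => // hXMN.
  have Pinit : N \in X /\ M \notin [::] by split.
  have [f2 [i2 [s2 [o2 [Hr2 [hMo hNo]]]]]] : exists f i s o, reach T2 X f i s o /\ (M \in o /\ N \notin o).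
    apply: (@eventually T2 X (fun i s o => N \in i /\ M \notin o)) HT _ _ _ _ _ (R0 T2 X) Pinit.
    move=> f i s o Hr [hNi hMo].
    case: i Hr hNi => [|a r] Hr hNi //.
    right; exists a, r; split=> //; split.
    - move=> hav. case: (eqVneq a N) => [eaN|neN]; last by left; split=> //; move: hNi; rewrite inE eq_sym (negbTE neN).
      exfalso. subst a.
      have [_ [p Ep] _] := reach_inv Hr.
      have hMp := suffix_before Ep hux hXMN.
      have hMi : M \notin N :: r by apply: (@uniq_catr_notin p); rewrite -?Ep.
      have hu := conf_uniq Hr hux.
      have hMs : M \in s by move: (conf_mem M Hr); rewrite hMX (negbTE hMo) (negbTE hMi) /= orbF.
      case: (KInv Hr) => [[Es Ei]|[w Es]].
        by rewrite Es in hMs.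
      subst s. have hMw : M \in w by move: hMs; rewrite mem_rcons inE (negbTE hMk).
      move: hav; apply/negP. exact: (T2_321 (sub_cons2 N (sub_uk k hMw)) hltMN hltkM).
    - move=> b st Es _. case: (eqVneq b M) => [ebM|nebM].
        right. subst b. split; first by rewrite mem_rcons inE eqxx.
        rewrite mem_rcons inE negb_or hMN' /=. exact: notin_io (conf_uniq Hr hux) hNi.
      left; split=> //. rewrite mem_rcons inE negb_or hMo andbT. by apply/eqP=> e; rewrite e eqxx in nebM.
  have [r2 [Ey2 _]] := conf_prefix Hr2.
  exfalso; apply: noMN. exact: (before_prefix Ey2 hMo hNo).
have huy : uniq y by rewrite (perm_uniq Hpy) iota_uniq.
have ltN : forall u, u \in X -> u != N -> u < N.
  move=> u; rewrite memX /N => h1 /eqP h2; lia.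
have subMN : forall f i s o, reach T2 X f i s o -> subseq [:: M; N] s -> False.
  move=> f i s o Hr hs. have [r [Ey' hsr]] := conf_prefix Hr.
  have hu := conf_uniq Hr hux.
  have hMs : M \in s by apply: (mem_subseq hs); rewrite mem_head.
  have hNs : N \in s by apply: (mem_subseq hs); rewrite inE mem_head orbT.
  apply: noMN. apply: (before_subseq Ey' huy (subseq_trans hs hsr)).
  - exact: notin_so hu hMs.
  - exact: notin_so hu hNs.
have [f3 [i3 [s3 [o3 [Hr3 [r3 [Ei3 hav3]]]]]]] : exists f i s o, reach T2 X f i s o /\ exists r, i = N :: r /\ avoids_all T2 (N :: s).
  apply: (@eventually T2 X (fun i s o => N \in i)) HT _ _ _ _ _ (R0 T2 X) hNX.
  move=> f i s o Hr hNi. case: i Hr hNi => [|a r] Hr hNi //.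
  case: (eqVneq a N) => [eaN|neN].
    subst a. case hav: (avoids_all T2 (N :: s)); first by left; exists r.
    right; exists N, r; split=> //; split; first by move=> h; rewrite h in hav.
    by move=> *; left.
  right; exists a, r; split=> //; split.
    by move=> _; left; move: hNi; rewrite inE eq_sym (negbTE neN).
  by move=> *; left.
subst i3.
have [E3 [p3 Ep3] _] := reach_inv Hr3.
have hu3 := conf_uniq Hr3 hux.
have hMr3 : M \in r3 := suffix_after Ep3 hux hMX hXNM.
case: (KInv Hr3) => [[Es Ei]|[w Es]].
  by case: Ei => e _; rewrite e eqxx in hNk.
subst s3.
case: f3 E3 Hr3 => [|f3] E3 Hr3; first by move: E3; rewrite /= mulnS !addSn.
have Hr3' := Rpush Hr3 hav3.
have hNs : N \notin rcons w k := notin_is hu3 (mem_head N r3).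
have huw : uniq (rcons w k) by move: hu3; rewrite cat_uniq => /and3P[_ _]; rewrite cat_uniq => /and3P[].
have wlt : forall u, u \in w -> u < k.
  move=> u hu.
  have huX : u \in X by rewrite (conf_mem u Hr3) mem_rcons inE hu !orbT.
  have huk : u != k by apply/eqP => e; move: huw; rewrite rcons_uniq -e hu.
  have huN : u != N by apply/eqP => e; move: hNs; rewrite -e mem_rcons inE hu orbT.
  have huN' := ltN u huX huN.
  case: (ltngtP u k) => // hku; last by rewrite hku eqxx in huk.
  by rewrite (negbTE (T2_321 (sub_cons2 N (sub_uk k hu)) huN' hku)) in hav3.
clear E3.
case: w hav3 Hr3 Hr3' hNs huw wlt hu3 => [|t [|t2 w'']] hav3 Hr3 Hr3' hNs huw wlt hu3.
-
  have Pinit : M \in r3 /\ exists s', [:: N; k] = s' ++ [:: N; k] by split => //; exists [::].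
  have [f4 [i4 [s4 [o4 [Hr4 hsub4]]]]] : exists f i s o, reach T2 X f i s o /\ subseq [:: M; N] s.
    apply: (@eventually T2 X (fun i s o => M \in i /\ exists s', s = s' ++ [:: N; k])) HT _ _ _ _ _ Hr3' Pinit.
    move=> f i s o Hr [hMi [s' Es]]. case: i Hr hMi => [|a r] Hr hMi //.
    right; exists a, r; split=> //; split.
    - move=> _. case: (eqVneq a M) => [eaM|neM].
        right. subst a s. apply: sub_cons2. by rewrite sub1seq mem_cat mem_head orbT.
      left. split; first by move: hMi; rewrite inE eq_sym (negbTE neM).
      by exists (a :: s'); rewrite Es.
    - move=> b st Es2 hnav. case: s' Es Es2 => [|b' s''] Es Es2.
        exfalso. rewrite Es in Es2 hnav.
        have hu := conf_uniq Hr hux.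
        have haX : a \in X by rewrite (conf_mem a Hr) mem_head !orbT.
        have haN : a != N by apply/eqP => e; move: (notin_is hu (mem_head a r)); rewrite Es e mem_head.
        by rewrite (A3N (ltN a haX haN) hltkN) in hnav.
      left; split=> //. exists s''. rewrite Es in Es2; by case: Es2.
  exact: subMN Hr4 hsub4.
-
  have ht : t < k by apply: wlt; rewrite mem_head.
  have htM : t < M := ltn_trans ht hltkM.
  have Pinit : M \in r3 /\ exists s', N :: rcons [:: t] k = s' ++ [:: N; t; k] by split => //; exists [::].
  have [f4 [i4 [s4 [o4 [Hr4 [hsub4|[Es4 [hMi4 [a4 [r4 [Ei4 ha4]]]]]]]]]]] : exists f i s o, reach T2 X f i s o /\
     (subseq [:: M; N] s \/ (s = [:: t; k] /\ M \in i /\ exists a r, i = a :: r /\ a < t)).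
    apply: (@eventually T2 X (fun i s o => M \in i /\ exists s', s = s' ++ [:: N; t; k])) HT _ _ _ _ _ Hr3' Pinit.
    move=> f i s o Hr [hMi [s' Es]]. case: i Hr hMi => [|a r] Hr hMi //.
    right; exists a, r; split=> //; split.
    - move=> _. case: (eqVneq a M) => [eaM|neM].
        right; left. subst a s. apply: sub_cons2. by rewrite sub1seq mem_cat mem_head orbT.
      left. split; first by move: hMi; rewrite inE eq_sym (negbTE neM).
      by exists (a :: s'); rewrite Es.
    - move=> b st Es2 hnav. case: s' Es Es2 => [|b' s''] Es Es2.
        rewrite Es in Es2 hnav. case: Es2 => eb est. subst b st.
        right; right. split=> //; split=> //. exists a, r; split=> //.
        have hu := conf_uniq Hr hux.
        have haX : a \in X by rewrite (conf_mem a Hr) mem_head !orbT.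
        have hans := notin_is hu (mem_head a r). rewrite Es !inE !negb_or in hans.
        case/and3P: hans => haN hat _.
        case: (ltngtP a t) => // hta; last by rewrite hta eqxx in hat.
        by rewrite (A4 ht hltkN hta (ltN a haX haN)) in hnav.
      left; split=> //. exists s''. rewrite Es in Es2; by case: Es2.
    exact: subMN Hr4 hsub4.
  subst s4 i4.
  have [E4 _ _] := reach_inv Hr4.
  case: f4 E4 Hr4 => [|f4] E4 Hr4; first by move: E4; rewrite /= mulnS !addSn.
  have hnav4 : ~~ avoids_all T2 [:: a4; t; k] by apply: (T2_123 (subseq_refl _) ha4 ht).
  have Hr5 := Rpop Hr4 hnav4.
  have Pinit5 : M \in a4 :: r4 /\ t \in rcons o4 t /\
     ((exists s' z, [:: k] = s' ++ [:: z; k] /\ z < t) \/ ([:: k] = [:: k] /\ exists a r, a4 :: r4 = a :: r /\ a < t)).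
    split=> //; split; first by rewrite mem_rcons mem_head.
    by right; split=> //; exists a4, r4.
  have [f6 [i6 [s6 [o6 [Hr6 [hto6 [z [hz hsub6]]]]]]]] : exists f i s o, reach T2 X f i s o /\
      (t \in o /\ exists z, z < t /\ subseq [:: M; z] s).
    apply: (@eventually T2 X (fun i s o => M \in i /\ t \in o /\
       ((exists s' z, s = s' ++ [:: z; k] /\ z < t) \/ (s = [:: k] /\ exists a r, i = a :: r /\ a < t))))
       HT _ _ _ _ _ Hr5 Pinit5.
    move=> f i s o Hr [hMi [hto [[s' [z [Es hz]]]|[Es [a [r [Ei hat]]]]]]].
    + case: i Hr hMi => [|a r] Hr hMi //.
      right; exists a, r; split=> //; split.
      * move=> _. case: (eqVneq a M) => [eaM|neM].
          right. split=> //. exists z; split=> //. subst a s. apply: sub_cons2.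
          by rewrite sub1seq mem_cat mem_head orbT.
        left. split; first by move: hMi; rewrite inE eq_sym (negbTE neM).
        split=> //. left. exists (a :: s'), z. by rewrite Es.
      * move=> b st Es2 hnav. case: s' Es Es2 => [|b' s''] Es Es2.
          rewrite Es in Es2 hnav. case: Es2 => eb est. subst b st.
          have haz := A3mono hnav (ltn_trans hz ht).
          left. split=> //. split; first by rewrite mem_rcons inE hto orbT.
          right. split=> //. exists a, r. split=> //. exact: ltn_trans haz hz.
        left. split=> //. split; first by rewrite mem_rcons inE hto orbT.
        left. exists s'', z. split=> //. rewrite Es in Es2; by case: Es2.
    + subst i s. right; exists a, r; split=> //; split.
      * move=> _. left. split.
          move: hMi; rewrite inE => /orP[/eqP e|//]. exfalso. move: (ltn_trans hat htM). by rewrite e ltnn.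
        split=> //. left. by exists [::], a.
      * move=> b st [eb est] hnav. subst b st. by rewrite T2_pair in hnav.
  have [r6 [Ey6 hsr6]] := conf_prefix Hr6.
  have hu6 := conf_uniq Hr6 hux.
  have hMs : M \in s6 by apply: (mem_subseq hsub6); rewrite mem_head.
  have hzs : z \in s6 by apply: (mem_subseq hsub6); rewrite inE mem_head orbT.
  have hMo := notin_so hu6 hMs.
  have hzo := notin_so hu6 hzs.
  apply: (west_231 (a := z) (b := t) (c := M) Hpy Hw).
  - by rewrite memy (conf_mem z Hr6) hzs orbT.
  - exact: before_prefix Ey6 hto6 hMo.
  - exact: before_subseq Ey6 huy (subseq_trans hsub6 hsr6) hMo hzo.
  - exact: hz.
  - exact: htM.
-
  exfalso.
  have h1 : t < k by apply: wlt; rewrite mem_head.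
  have h2 : t2 < k by apply: wlt; rewrite inE mem_head orbT.
  have h12 : t != t2 by move: huw => /= /andP[]; rewrite inE negb_or => /andP[].
  case: (ltngtP t t2) => h; last by rewrite h eqxx in h12.
  + move: hav3; apply/negP. apply: (T2_123 (u:=t) (v:=t2) (w:=k)) => //.
    apply: (subseq_trans _ (subseq_cons _ N)). apply: sub_cons2. apply: sub_cons2.
    by rewrite sub1seq mem_rcons mem_head.
  + move: hav3; apply/negP. apply: (T2_321 (u:=N) (v:=t) (w:=t2)) => //.
    * apply: sub_cons2. apply: sub_cons2. by rewrite sub1seq mem_head.
    * apply: ltN; first by rewrite (conf_mem t Hr3) /= inE eqxx !orbT.
      by apply/eqP=> e; move: hNs; rewrite -e /= inE eqxx.
Qed.


Theorem lemma4p2 (n : nat) (x : seq nat) :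
  0 < n -> in_Sort n [:: 1; 2; 3] [:: 3; 2; 1] x ->
  head 0 x \in [:: n.-1; n].
Proof.
move=> hn [Hpx Hw].
case: x Hpx Hw => [|k x'] Hpx Hw.
  by move: (perm_size Hpx); rewrite size_iota /=; lia.
rewrite /= !inE.
have hk : k \in iota 1 n by rewrite -(perm_mem Hpx) mem_head.
rewrite mem_iota in hk.
case: (boolP ((k == n.-1) || (k == n))) => // hne.
exfalso. apply: (main Hpx Hw). lia.
Qed.
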